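(* Let $\mathbf V$ be a monoid variety and let $\mathcal F$ be a logic corresponding to $\mathbf V$. Let $f$ be a partial function $\Sigma^\ast\to\Sigma^\ast$ definable by a complete $\mathbf V$-bimachine. Then $f$ is definable by an $\mathcal F$-translation.
   Context: Bimachines: a bimachine is a tuple $B=(L,R,\omega,\lambda,\rho)$ where $L$ is a deterministic left automaton over $\Sigma$ with initial state $l_0$, $R$ is a deterministic right automaton (reading right to left) with initial state $r_0$, $\omega:L\times\Sigma\times R\to\Sigma^\ast$ is a partial output function and $\rho:L\to\Sigma^\ast$, $\lambda:R\to\Sigma^\ast$ are partial. For $u=\sigma_1\cdots\sigma_n$ with runs $l_0\xrightarrow{\sigma_1}l_1\cdots\xrightarrow{\sigma_n}l_n$ of $L$ and $r_n\xleftarrow{\sigma_1}r_{n-1}\cdots r_1\xleftarrow{\sigma_n}r_0$ of $R$, $[\![B]\!](u)=\lambda(r_n)\,\omega(l_0,\sigma_1,r_{n-1})\cdots\omega(l_{i-1},\sigma_i,r_{n-i})\cdots\omega(l_{n-1},\sigma_n,r_0)\,\rho(l_n)$ when all these are defined. $B$ is complete if $\omega$ is total. The transition congruence of an automaton $A$ with state set $Q$ is $u\equiv_A v$ iff for all $p,q\in Q$, ($A$ has a run from $p$ to $q$ on $u$) $\Leftrightarrow$ (it has one on $v$); the transition monoid is $\Sigma^\ast/\equiv_A$; $A$ is a $\mathbf V$-automaton if its transition monoid is in $\mathbf V$. $B$ is a $\mathbf V$-bimachine if $L$ and $R$ are $\mathbf V$-automata. A language is a $\mathbf V$-language if it is recognized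 by some $\mathbf V$-automaton. Logics: $\mathcal F$ is a fragment of monadic second-order logic over words (signature $<$ and unary letter predicates); a language is an $\mathcal F$-language if it is the set of words satisfying some closed $\mathcal F$-formula; $\mathcal F$ corresponds to $\mathbf V$ if the $\mathcal F$-languages are exactly the $\mathbf V$-languages. Translations: an $\mathcal F$-translation is a tuple $\mathcal T=(k,S,(\varphi^<_{j,\sigma,v},\varphi^>_{j,\sigma,v})_{1\le j\le k,\sigma\in\Sigma,v\in S},(\varphi^i_v)_{v\in S},(\varphi^t_v)_{v\in S})$ with $k>0$, $S\subset\Sigma^\ast$ finite, and all $\varphi$ closed $\mathcal F$-formulas. $(u,w)\in[\![\mathcal T]\!]$ iff for $u=\sigma_1\cdots\sigma_n$ there is a decomposition $w=w_0w_1\cdots w_nw_{n+1}$ with all $w_i\in S$ such that for each $1\le i\le n$ there is $j\le k$ with $\sigma_1\cdots\sigma_{i-1}\models\varphi^<_{j,\sigma_i,w_i}$ and $\sigma_{i+1}\cdots\sigma_n\models\varphi^>_{j,\sigma_i,w_i}$, and $u\models\varphi^i_{w_0}$, $u\models\varphi^t_{w_{n+1}}$. It is required to be exhaustive: for all $\sigma\in\Sigma$, $u,w\in\Sigma^\ast$ there are $j\le k$, $v\in S$ with $u\models\varphi^<_{j,\sigma,v}$ and $w\models\varphi^>_{j,\sigma,v}$; and functional: for $v_1\ne v_2$ in $S$ and any $j,j',\sigma$, either $\varphi^<_{j,\sigma,v_1}\wedge\varphi^<_{j',\sigma,v_2}$ or $\varphi^>_{j,\sigma,v_1}\wedge\varphi^>_{j',\sigma,v_2}$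 is unsatisfiable, and $\varphi^i_{v_1}\wedge\varphi^i_{v_2}$, $\varphi^t_{v_1}\wedge\varphi^t_{v_2}$ are unsatisfiable. A function is definable by $\mathcal T$ if it equals $[\![\mathcal T]\!]$. *)

(* Defs.v *)
From mathcomp Require Import all_boot.
Set Implicit Arguments.
Unset Strict Implicit.
Unset Printing Implicit Defensive.

Record finMonoid := FinMonoid {
  fm_sort :> finType;
  fm_op : fm_sort -> fm_sort -> fm_sort;
  fm_one : fm_sort;
  fm_assoc : associative fm_op;
  fm_left_id : left_id fm_one fm_op;
  fm_right_id : right_id fm_one fm_op }.

Definition fm_morph (M N : finMonoid) (phi : M -> N) : Prop :=
  phi (fm_one M) = fm_one N /\
  forall x y, phi (fm_op x y) = fm_op (phi x) (phi y).

Definition fm_divides (N M : finMonoid) : Prop :=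
  exists (S : {set M}) (phi : M -> N),
    [/\ fm_one M \in S,
        {in S &, forall x y, fm_op x y \in S},
        phi (fm_one M) = fm_one N,
        {in S &, forall x y, phi (fm_op x y) = fm_op (phi x) (phi y)} &
        forall n : N, exists2 m, m \in S & phi m = n].

(* A monoid variety (pseudovariety) of finite monoids: a class of finite
   monoids closed under submonoids, homomorphic images and finite direct
   products (the empty product being the trivial monoid).  A monoid P is
   (isomorphic to) the direct product M1 x M2 when there are morphisms
   p1, p2 such that x |-> (p1 x, p2 x) is a bijection P -> M1 * M2. *)
Definition monoid_variety (V : finMonoid -> Prop) : Prop :=
  [/\ (forall M N : finMonoid, V M -> fm_divides N M -> V N),
      (forall M1 M2 P : finMonoid, V M1 -> V M2 ->
         (exists (p1 : P -> M1) (p2 : P -> M2),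
            [/\ fm_morph p1, fm_morph p2 &
                bijective (fun x => (p1 x, p2 x))]) -> V P) &
      (forall M : finMonoid, #|M| = 1 -> V M)].

(* The quotient monoid Sigma^* / c lies in V, where c is a congruence:
   some monoid of V is the image of a surjective morphism of Sigma^*
   whose kernel is exactly c. *)
Definition quotient_in_V (V : finMonoid -> Prop) (Sigma : Type)
    (c : seq Sigma -> seq Sigma -> Prop) : Prop :=
  exists (M : finMonoid) (h : seq Sigma -> M),
    [/\ V M,
        h [::] = fm_one M,
        (forall u v, h (u ++ v) = fm_op (h u) (h v)),
        (forall m : M, exists u, h u = m) &
        (forall u v, h u = h v <-> c u v)].

Record DA (Sigma : Type) := MkDA {
  da_state :> finType;
  da_init : da_state;
  da_delta : da_state -> Sigma -> option da_state }.
Arguments da_delta {Sigma} d _ _.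

Fixpoint trans (Sigma : Type) (A : DA Sigma) (p : da_state A) (u : seq Sigma)
  : option (da_state A) :=
  match u with
  | [::] => Some p
  | a :: u' => match da_delta A p a with
               | Some q => @trans Sigma A q u'
               | None => None
               end
  end.
Arguments trans {Sigma} A p u.

Definition tcongL (Sigma : Type) (A : DA Sigma) (u v : seq Sigma) : Prop :=
  forall p q : da_state A, trans A p u = Some q <-> trans A p v = Some q.

(* transition congruence of a right automaton (reading right to left):
   a run of a right automaton on u is a run of the underlying transition
   function on rev u *)
Definition tcongR (Sigma : Type) (A : DA Sigma) (u v : seq Sigma) : Prop :=
  forall p q : da_state A, trans A p (rev u) = Some q <-> trans A p (rev v) = Some q.

Definition V_automatonL (V : finMonoid -> Prop) (Sigma : Type) (A : DA Sigma)
  : Prop := quotient_in_V V (tcongL A).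

Definition V_automatonR (V : finMonoid -> Prop) (Sigma : Type) (A : DA Sigma)
  : Prop := quotient_in_V V (tcongR A).

Definition V_language (V : finMonoid -> Prop) (Sigma : Type)
    (L : seq Sigma -> Prop) : Prop :=
  exists (A : DA Sigma) (Fin : pred (da_state A)),
    V_automatonL V A /\
    forall u, L u <-> exists q, trans A (da_init A) u = Some q /\ Fin q.

Record bimachine (Sigma : Type) := MkBimachine {
  bmL : DA Sigma;
  bmR : DA Sigma;
  bm_omega : da_state bmL -> Sigma -> da_state bmR -> option (seq Sigma);
  bm_lambda : da_state bmR -> option (seq Sigma);
  bm_rho : da_state bmL -> option (seq Sigma) }.
Arguments bm_omega {Sigma} b _ _ _.
Arguments bm_lambda {Sigma} b _.
Arguments bm_rho {Sigma} b _.

Definition complete_bm (Sigma : Type) (B : bimachine Sigma) : Prop :=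
  forall l a r, bm_omega B l a r <> None.

Definition V_bimachine (V : finMonoid -> Prop) (Sigma : Type)
    (B : bimachine Sigma) : Prop :=
  V_automatonL V (bmL B) /\ V_automatonR V (bmR B).

Fixpoint splits (Sigma : Type) (p s : seq Sigma)
  : seq (seq Sigma * Sigma * seq Sigma) :=
  match s with
  | [::] => [::]
  | a :: s' => (p, a, s') :: splits (rcons p a) s'
  end.

Fixpoint ocat (Sigma : Type) (l : seq (option (seq Sigma)))
  : option (seq Sigma) :=
  match l with
  | [::] => Some [::]
  | o :: l' => match o, ocat l' with
               | Some w, Some w' => Some (w ++ w')
               | _, _ => None
               end
  end.

(* output at position (p, a, s): omega(l, a, r) with l the state of L
   after p and r the state of R after reading s from right to left *)
Definition bm_letter (Sigma : Type) (B : bimachine Sigma)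
    (x : seq Sigma * Sigma * seq Sigma) : option (seq Sigma) :=
  let: (p, a, s) := x in
  match trans (bmL B) (da_init (bmL B)) p,
        trans (bmR B) (da_init (bmR B)) (rev s) with
  | Some l, Some r => bm_omega B l a r
  | _, _ => None
  end.

Definition bm_sem (Sigma : Type) (B : bimachine Sigma) (u : seq Sigma)
  : option (seq Sigma) :=
  match trans (bmR B) (da_init (bmR B)) (rev u),
        trans (bmL B) (da_init (bmL B)) u with
  | Some rn, Some ln =>
      match bm_lambda B rn, ocat (map (bm_letter B) (splits [::] u)),
            bm_rho B ln with
      | Some x, Some y, Some z => Some (x ++ y ++ z)
      | _, _, _ => None
      end
  | _, _ => None
  end.

Inductive mso (Sigma : Type) :=
| MTrue
| MFalse
| MLt of nat & nat
| MEq of nat & nat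
| MLetter of Sigma & nat
| MMem of nat & nat
| MNot of mso Sigma
| MAnd of mso Sigma & mso Sigma
| MOr of mso Sigma & mso Sigma
| MImp of mso Sigma & mso Sigma
| MExFO of nat & mso Sigma
| MAllFO of nat & mso Sigma
| MExSO of nat & mso Sigma
| MAllSO of nat & mso Sigma.

Arguments MTrue {Sigma}.
Arguments MFalse {Sigma}.
Arguments MLt {Sigma}.
Arguments MEq {Sigma}.
Arguments MMem {Sigma}.

Definition upd (T : Type) (f : nat -> T) (x : nat) (t : T) : nat -> T :=
  fun y => if y == x then t else f y.

(* positions of u are 0 .. size u - 1 *)
Fixpoint sat (Sigma : Type) (u : seq Sigma) (fo : nat -> nat)
    (so : nat -> nat -> bool) (phi : mso Sigma) : Prop :=
  match phi with
  | MTrue => True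
  | MFalse => False
  | MLt x y => fo x < fo y
  | MEq x y => fo x = fo y
  | MLetter a x => onth u (fo x) = Some a
  | MMem x X => so X (fo x)
  | MNot p => ~ sat u fo so p
  | MAnd p q => sat u fo so p /\ sat u fo so q
  | MOr p q => sat u fo so p \/ sat u fo so q
  | MImp p q => sat u fo so p -> sat u fo so q
  | MExFO x p => exists i, i < size u /\ sat u (upd fo x i) so p
  | MAllFO x p => forall i, i < size u -> sat u (upd fo x i) so p
  | MExSO X p => exists P : nat -> bool,
                   (forall i, P i -> i < size u) /\ sat u fo (upd so X P) p
  | MAllSO X p => forall P : nat -> bool,
                   (forall i, P i -> i < size u) -> sat u fo (upd so X P) p
  end.

Fixpoint fo_free (Sigma : Type) (phi : mso Sigma) : seq nat :=
  match phi with
  | MTrue | MFalse => [::]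
  | MLt x y | MEq x y => [:: x; y]
  | MLetter _ x | MMem x _ => [:: x]
  | MNot p => fo_free p
  | MAnd p q | MOr p q | MImp p q => fo_free p ++ fo_free q
  | MExFO x p | MAllFO x p => filter (predC1 x) (fo_free p)
  | MExSO _ p | MAllSO _ p => fo_free p
  end.

Fixpoint so_free (Sigma : Type) (phi : mso Sigma) : seq nat :=
  match phi with
  | MTrue | MFalse | MLt _ _ | MEq _ _ | MLetter _ _ => [::]
  | MMem _ X => [:: X]
  | MNot p => so_free p
  | MAnd p q | MOr p q | MImp p q => so_free p ++ so_free q
  | MExFO _ p | MAllFO _ p => so_free p
  | MExSO X p | MAllSO X p => filter (predC1 X) (so_free p)
  end.

Definition closed (Sigma : Type) (phi : mso Sigma) : Prop :=
  fo_free phi = [::] /\ so_free phi = [::].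

(* u |= phi, for closed phi (the valuation is irrelevant) *)
Definition models (Sigma : Type) (u : seq Sigma) (phi : mso Sigma) : Prop :=
  sat u (fun _ => 0) (fun _ _ => false) phi.

(* A logic (fragment of MSO): for each alphabet, a set of MSO formulas. *)
Definition logic := forall A : finType, mso A -> Prop.

Definition F_language (F : logic) (A : finType) (L : seq A -> Prop) : Prop :=
  exists phi : mso A, F A phi /\ closed phi /\ forall u, L u <-> models u phi.

Definition corresponds (F : logic) (V : finMonoid -> Prop) : Prop :=
  forall (A : finType) (L : seq A -> Prop), F_language F L <-> V_language V L.

Record translation (Sigma : finType) := MkTranslation {
  tr_k : nat;
  tr_S : seq (seq Sigma);
  tr_lt : 'I_tr_k -> Sigma -> seq Sigma -> mso Sigma;
  tr_gt : 'I_tr_k -> Sigma -> seq Sigma -> mso Sigma;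
  tr_init : seq Sigma -> mso Sigma;
  tr_term : seq Sigma -> mso Sigma }.
Arguments tr_lt {Sigma} t _ _ _.
Arguments tr_gt {Sigma} t _ _ _.
Arguments tr_init {Sigma} t _.
Arguments tr_term {Sigma} t _.

Definition unsat2 (Sigma : finType) (p q : mso Sigma) : Prop :=
  ~ exists u, models u p /\ models u q.

Definition F_translation (F : logic) (Sigma : finType)
    (T : translation Sigma) : Prop :=
  [/\ 0 < tr_k T,
      (forall j a v, v \in tr_S T ->
         [/\ F Sigma (tr_lt T j a v), closed (tr_lt T j a v),
             F Sigma (tr_gt T j a v) & closed (tr_gt T j a v)]),
      (forall v, v \in tr_S T ->
         [/\ F Sigma (tr_init T v), closed (tr_init T v),
             F Sigma (tr_term T v) & closed (tr_term T v)]),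
      (forall (a : Sigma) (u w : seq Sigma), exists j v,
         [/\ v \in tr_S T, models u (tr_lt T j a v) & models w (tr_gt T j a v)]) &
      (forall v1 v2, v1 \in tr_S T -> v2 \in tr_S T -> v1 <> v2 ->
         (forall j j' a,
            unsat2 (tr_lt T j a v1) (tr_lt T j' a v2) \/
            unsat2 (tr_gt T j a v1) (tr_gt T j' a v2)) /\
         unsat2 (tr_init T v1) (tr_init T v2) /\
         unsat2 (tr_term T v1) (tr_term T v2))].

Definition tr_rel (Sigma : finType) (T : translation Sigma) (u w : seq Sigma)
  : Prop :=
  exists (w0 : seq Sigma) (ws : seq (seq Sigma)) (wt : seq Sigma),
    [/\ size ws = size u,
        w = w0 ++ flatten ws ++ wt,
        w0 \in tr_S T, wt \in tr_S T & all (mem (tr_S T)) ws] /\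
    (forall i a, i < size u -> onth u i = Some a ->
       exists j, models (take i u) (tr_lt T j a (nth [::] ws i)) /\
                 models (drop i.+1 u) (tr_gt T j a (nth [::] ws i))) /\
    models u (tr_init T w0) /\
    models u (tr_term T wt).

Definition defines (Sigma : finType) (T : translation Sigma)
    (f : seq Sigma -> option (seq Sigma)) : Prop :=
  forall u w, f u = Some w <-> tr_rel T u w.

(* Main.v *)
From Stdlib Require Import ClassicalEpsilon.
Require Import Defs.
From mathcomp Require Import all_boot.
Set Implicit Arguments. Unset Strict Implicit. Unset Printing Implicit Defensive.

Section Gen.
Variable Sigma : Type.

Lemma trans_cat (A : DA Sigma) p u v :
  trans A p (u ++ v) = match trans A p u with Some q => trans A q v | None => None end.
Proof. elim: u p => [|a u IH] p //=. by case: (da_delta A p a). Qed.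

Lemma trans_prefix (A : DA Sigma) p u v q :
  trans A p (u ++ v) = Some q -> exists q', trans A p u = Some q'.
Proof. rewrite trans_cat. case: (trans A p u) => // q' _; by exists q'. Qed.

Lemma tcongL_eq (A : DA Sigma) u v x : tcongL A u v -> trans A x u = trans A x v.
Proof.
move=> H. case Eu: (trans A x u) => [q|]; case Ev: (trans A x v) => [q'|] //.
- by have := (H x q).1 Eu; rewrite Ev.
- by have := (H x q).1 Eu; rewrite Ev.
- by have := (H x q').2 Ev; rewrite Eu.
Qed.

Lemma tcongR_eq (A : DA Sigma) u v x : tcongR A u v -> trans A x (rev u) = trans A x (rev v).
Proof.
move=> H. case Eu: (trans A x (rev u)) => [q|]; case Ev: (trans A x (rev v)) => [q'|] //.
- by have := (H x q).1 Eu; rewrite Ev.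
- by have := (H x q).1 Eu; rewrite Ev.
- by have := (H x q').2 Ev; rewrite Eu.
Qed.

Definition cayley (M : finMonoid) (h : seq Sigma -> M) : DA Sigma :=
  @MkDA Sigma M (fm_one M) (fun m a => Some (fm_op m (h [:: a]))).

Lemma trans_cayley (M : finMonoid) (h : seq Sigma -> M) (h0 : h [::] = fm_one M)
  (hm : forall u v, h (u ++ v) = fm_op (h u) (h v)) (m : M) u :
  trans (cayley h) m u = Some (fm_op m (h u)).
Proof.
elim: u m => [|a u IH] m /=; first by rewrite h0 fm_right_id.
by rewrite IH -fm_assoc -hm.
Qed.

Lemma satV (V : finMonoid -> Prop) (c : seq Sigma -> seq Sigma -> Prop)
  (P : seq Sigma -> Prop) :
  quotient_in_V V c -> (forall u v, c u v -> P u -> P v) -> V_language V P.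
Proof.
case=> M [h [VM h0 hm hs hc]] Pc.
exists (cayley h).
exists (fun m : M => if excluded_middle_informative (exists u, h u = m /\ P u)
                     then true else false).
split.
- exists M, h; split => // u v; split.
  + move=> E p q; by rewrite !trans_cayley // E.
  + move=> H; have := (H (fm_one M) (fm_op (fm_one M) (h u))).1.
    rewrite !trans_cayley // !fm_left_id => /(_ erefl) [] ->. done.
- move=> u; split.
  + move=> Pu; exists (fm_op (fm_one M) (h u)); rewrite trans_cayley //; split => //.
    case: excluded_middle_informative => // n; exfalso; apply: n.
    exists u; by rewrite fm_left_id.
  + case=> q []; rewrite trans_cayley // => -[<-].
    case: excluded_middle_informative => // -[u' [E Pu']] _.
    apply: Pc Pu'; apply/hc; by rewrite E fm_left_id.
Qed.

Lemma size_splits (p s : seq Sigma) : size (splits p s) = size s.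
Proof. by elim: s p => [|a s IH] p //=; rewrite IH. Qed.

Lemma nth_splits d x0 (p s : seq Sigma) i : i < size s ->
  nth d (splits p s) i = (p ++ take i s, nth x0 s i, drop i.+1 s).
Proof.
elim: s p i => [|a s IH] p [|i] //= Hi.
- by rewrite cats0 drop0.
- by rewrite IH // cat_rcons.
Qed.

Lemma ocat_map X (s : seq X) (h1 : X -> option (seq Sigma)) h2 :
  (forall x, List.In x s -> h1 x = Some (h2 x)) ->
  ocat (map h1 s) = Some (flatten (map h2 s)).
Proof.
elim: s => [|x s IH] //= H.
by rewrite H; [rewrite IH // => y Hy; apply: H; right|left].
Qed.

Lemma splits_in (x : seq Sigma * Sigma * seq Sigma) p s : List.In x (splits p s) ->
  exists p' a s', x = (p ++ p', a, s') /\ s = p' ++ a :: s'.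
Proof.
elim: s p => [|a s IH] p //= [<-|H].
- by exists [::], a, s; rewrite cats0.
- have [p' [b [s' [-> ->]]]] := IH _ H.
  by exists (a :: p'), b, s'; rewrite cat_rcons.
Qed.
End Gen.

Section Main.
Variables (V : finMonoid -> Prop) (F : logic) (Sigma : finType) (B : bimachine Sigma).
Hypothesis HC : corresponds F V.
Hypothesis HB : complete_bm B.
Hypothesis HV : V_bimachine V B.

Local Notation LA := (bmL B).
Local Notation RA := (bmR B).
Local Notation l0 := (da_init (bmL B)).
Local Notation r0 := (da_init (bmR B)).

Definition pick_form (P : seq Sigma -> Prop) : mso Sigma :=
  match excluded_middle_informative (F_language F P) with
  | left H => proj1_sig (constructive_indefinite_description _ H)
  | right _ => MFalse end.

Lemma pick_formP P : F_language F P ->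
  [/\ @F Sigma (pick_form P), Defs.closed (pick_form P) &
      forall u, P u <-> models u (pick_form P)].
Proof.
rewrite /pick_form; case: excluded_middle_informative => // H _.
case: constructive_indefinite_description => phi [? [? ?]] /=. by split.
Qed.

Lemma langL (Q : option LA -> Prop) : F_language F (fun u => Q (trans LA l0 u)).
Proof.
apply/HC; apply: (satV (c := tcongL LA)); first by case: HV.
by move=> u v /tcongL_eq ->.
Qed.

Lemma langR (Q : option RA -> Prop) : F_language F (fun u => Q (trans RA r0 (rev u))).
Proof.
apply/HC; apply: (satV (c := tcongR RA)); first by case: HV.
by move=> u v /tcongR_eq ->.
Qed.

Definition gout (ol : option LA) (a : Sigma) (or : option RA) : seq Sigma :=
  match ol, or with Some l, Some r => odflt [::] (bm_omega B l a r) | _, _ => [::] end.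

Definition JT := (option LA * option RA)%type.
Definition kk := #|{: JT}|.
Definition jv (j : 'I_kk) : JT := enum_val j.

Definition lt_form (j : 'I_kk) (a : Sigma) (v : seq Sigma) :=
  pick_form (fun p => (fun o => o = (jv j).1 /\ gout (jv j).1 a (jv j).2 = v) (trans LA l0 p)).
Definition gt_form (j : 'I_kk) (a : Sigma) (v : seq Sigma) :=
  pick_form (fun s => (fun o => o = (jv j).2) (trans RA r0 (rev s))).
Definition init_form (v : seq Sigma) :=
  pick_form (fun u => (fun o => exists r, o = Some r /\ bm_lambda B r = Some v)
                        (trans RA r0 (rev u))).
Definition term_form (v : seq Sigma) :=
  pick_form (fun u => (fun o => exists l, o = Some l /\ bm_rho B l = Some v)
                        (trans LA l0 u)).

Definition Sset : seq (seq Sigma) :=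
  [seq gout x.1.1 x.1.2 x.2 | x <- enum {: (option LA * Sigma) * option RA}] ++
  [seq odflt [::] (bm_lambda B r) | r <- enum {: RA}] ++
  [seq odflt [::] (bm_rho B l) | l <- enum {: LA}].

Definition TT := @MkTranslation Sigma kk Sset lt_form gt_form init_form term_form.

Lemma lt_P j a v p : models p (lt_form j a v) <->
  trans LA l0 p = (jv j).1 /\ gout (jv j).1 a (jv j).2 = v.
Proof. have [_ _ H] := pick_formP (langL (fun o => o = (jv j).1 /\ gout (jv j).1 a (jv j).2 = v)).
by rewrite -H. Qed.

Lemma gt_P j a v s : models s (gt_form j a v) <-> trans RA r0 (rev s) = (jv j).2.
Proof. have [_ _ H] := pick_formP (langR (fun o => o = (jv j).2)). by rewrite -H. Qed.

Lemma init_P v u : models u (init_form v) <->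
  exists r, trans RA r0 (rev u) = Some r /\ bm_lambda B r = Some v.
Proof. have [_ _ H] := pick_formP (langR (fun o => exists r, o = Some r /\ bm_lambda B r = Some v)).
by rewrite -H. Qed.

Lemma term_P v u : models u (term_form v) <->
  exists l, trans LA l0 u = Some l /\ bm_rho B l = Some v.
Proof. have [_ _ H] := pick_formP (langL (fun o => exists l, o = Some l /\ bm_rho B l = Some v)).
by rewrite -H. Qed.

Lemma TT_ok : F_translation F TT.
Proof.
split.
- rewrite /= /kk; apply/card_gt0P; by exists (None, None).
- move=> j a v _ /=.
  have [? ? _] := pick_formP (langL (fun o => o = (jv j).1 /\ gout (jv j).1 a (jv j).2 = v)).
  have [? ? _] := pick_formP (langR (fun o => o = (jv j).2)).
  by split.
- move=> v _ /=.
  have [? ? _] := pick_formP (langR (fun o => exists r, o = Some r /\ bm_lambda B r = Some v)).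
  have [? ? _] := pick_formP (langL (fun o => exists l, o = Some l /\ bm_rho B l = Some v)).
  by split.
- move=> a u w /=.
  exists (enum_rank (trans LA l0 u, trans RA r0 (rev w))).
  exists (gout (trans LA l0 u) a (trans RA r0 (rev w))).
  split.
  + rewrite /Sset mem_cat; apply/orP; left.
    apply/mapP; exists ((trans LA l0 u, a), trans RA r0 (rev w)) => //.
    by rewrite mem_enum.
  + by apply/lt_P; rewrite /jv enum_rankK.
  + by apply/gt_P; rewrite /jv enum_rankK.
- move=> v1 v2 _ _ Hne /=; split; [|split].
  + move=> j j' a.
    case: (classic (unsat2 (tr_lt TT j a v1) (tr_lt TT j' a v2))) => Hl; [by left|right].
    move=> [s [/gt_P Hs /gt_P Hs']]; apply: Hl => -[p [/lt_P [Hp Hg] /lt_P [Hp' Hg']]].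
    apply: Hne; rewrite -Hg -Hg' -Hp -Hp' -Hs -Hs'. done.
  + move=> [u [/init_P [r [Hr Hl]] /init_P [r' [Hr' Hl']]]].
    move: Hr'; rewrite Hr => -[Er]; subst r'.
    by apply: Hne; move: Hl'; rewrite Hl => -[].
  + move=> [u [/term_P [r [Hr Hl]] /term_P [r' [Hr' Hl']]]].
    move: Hr'; rewrite Hr => -[Er]; subst r'.
    by apply: Hne; move: Hl'; rewrite Hl => -[].
Qed.

Definition gp (x : seq Sigma * Sigma * seq Sigma) :=
  let: (p, a, s) := x in gout (trans LA l0 p) a (trans RA r0 (rev s)).

Lemma letter_ok u l r : trans LA l0 u = Some l -> trans RA r0 (rev u) = Some r ->
  forall x, List.In x (splits [::] u) -> bm_letter B x = Some (gp x).
Proof.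
move=> El Er x /splits_in [p [a [s [-> Eu]]]] /=.
rewrite Eu in El Er.
have [l' El'] := trans_prefix El.
rewrite rev_cat rev_cons -cats1 -catA in Er.
have [r' Er'] := trans_prefix Er.
rewrite El' Er' /=.
case Ho: (bm_omega B l' a r') => [o|] //.
exfalso; exact: (HB Ho).
Qed.

Lemma sem_ok u w : bm_sem B u = Some w <-> tr_rel TT u w.
Proof.
rewrite /bm_sem; split.
- case Er: (trans RA r0 (rev u)) => [rn|] //; case El: (trans LA l0 u) => [ln|] //.
  case Hx: (bm_lambda B rn) => [x|] //.
  rewrite (ocat_map (h2 := gp)); last exact: letter_ok El Er.
  case Hz: (bm_rho B ln) => [z|] // [<-].
  exists x, (map gp (splits [::] u)), z; split; [split|split; [|split]].
  + by rewrite size_map size_splits.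
  + done.
  + rewrite /Sset !mem_cat; apply/orP; right; apply/orP; left.
    apply/mapP; exists rn; by [rewrite mem_enum | rewrite Hx].
  + rewrite /Sset !mem_cat; apply/orP; right; apply/orP; right.
    apply/mapP; exists ln; by [rewrite mem_enum | rewrite Hz].
  + apply/allP => v /mapP [[[p a] s] _ ->] /=.
    rewrite /Sset !mem_cat; apply/orP; left.
    apply/mapP; exists ((trans LA l0 p, a), trans RA r0 (rev s)) => //.
    by rewrite mem_enum.
  + move=> i a Hi Hu.
    exists (enum_rank (trans LA l0 (take i u), trans RA r0 (rev (drop i.+1 u)))).
    rewrite (nth_map ([::], a, [::])) ?size_splits // (nth_splits _ a) //.
    rewrite (@onth_nth _ a _ _ _ Hu) /=.
    by split; [apply/lt_P|apply/gt_P]; rewrite /jv enum_rankK.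
  + by apply/init_P; exists rn.
  + by apply/term_P; exists ln.
- case=> w0 [ws [wt [[Hs -> H0 Ht Hws] [Hpos [/init_P [rn [Er Hl]] /term_P [ln [El Hr]]]]]]].
  rewrite Er El Hl Hr (ocat_map (h2 := gp)); last exact: letter_ok El Er.
  suff -> : ws = map gp (splits [::] u) by [].
  apply: (@eq_from_nth _ [::]); first by rewrite size_map size_splits.
  move=> i Hi; rewrite Hs in Hi.
  have [a Ha] : exists a, onth u i = Some a.
    move: (onthTE u i); rewrite Hi; case: onth => // a _; by exists a.
  have [j [/lt_P [Hp Hg] /gt_P Hg2]] := Hpos i a Hi Ha.
  rewrite (nth_map ([::], a, [::])) ?size_splits // (nth_splits _ a) //.
  by rewrite (@onth_nth _ a _ _ _ Ha) /= -Hg Hp Hg2.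
Qed.
End Main.

Theorem mainTheorem3 (V : finMonoid -> Prop) (F : logic) (Sigma : finType)
    (f : seq Sigma -> option (seq Sigma)) :
  monoid_variety V ->
  corresponds F V ->
  (exists B : bimachine Sigma,
     [/\ complete_bm B, V_bimachine V B & forall u, f u = bm_sem B u]) ->
  exists T : translation Sigma, F_translation F T /\ defines T f.
Proof.
move=> _ HC [B [HB HV Hf]].
exists (TT F B); split; first exact: TT_ok.
by move=> u w; rewrite Hf; apply: sem_ok.
Qed.
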